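(* Let $\mathbf{P_0},\mathbf{P_1}$ be $n\times n$ transition probability matrices of irreducible and aperiodic Markov chains on $n$ states, let $\mathbf{P_s}=(1-s)\mathbf{P_0}+s\mathbf{P_1}$ for $s\in[0,1]$, and let $\pi_s$ be the stationary distribution of $\mathbf{P_s}$. Then $s\mapsto\pi_s$ is continuous at $s=0$ with respect to the total variation norm. In particular, if $\epsilon>0$, $\sigma$ is the smallest nonzero singular value of $\mathbb{I}-\mathbf{P_0}$, and $\delta=\frac{\epsilon\sigma}{2n^{3/2}}$, then $\|\pi_s-\pi_0\|_{TV}\le\epsilon$ for all $s\in[0,1]$ with $s\le\delta$.
   Context: Distributions are row vectors; $\|\mu-\nu\|_{TV}=\frac12\|\mu-\nu\|_1$. Singular values are with respect to the Euclidean inner product; $\mathbb{I}$ is the identity matrix. *)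

(* Defs.v *)
From HB Require Import structures.
From mathcomp Require Import all_boot all_order all_algebra.
From mathcomp Require Import reals.
Set Implicit Arguments. Unset Strict Implicit. Unset Printing Implicit Defensive.
Import Order.TTheory GRing.Theory Num.Theory.
Local Open Scope ring_scope.

Section MarkovDefs.
Variable R : realType.
Variable n : nat.

Definition mxpow (P : 'M[R]_n) (k : nat) : 'M[R]_n :=
  iter k (fun A => A *m P) 1%:M.

Definition stochastic (P : 'M[R]_n) : Prop :=
  (forall i j, 0 <= P i j) /\ (forall i, \sum_j P i j = 1).

Definition irreducible (P : 'M[R]_n) : Prop :=
  forall i j, exists k : nat, 0 < mxpow P k i j.

(* aperiodic: for every state, the gcd of its return times
   {k >= 1 | P^k i i > 0} is 1, i.e. 1 is its only common divisor *)
Definition aperiodic (P : 'M[R]_n) : Prop :=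
  forall i, forall d : nat,
    (forall k : nat, (0 < k)%N -> 0 < mxpow P k i i -> (d %| k)%N) -> d = 1%N.

Definition distribution (mu : 'rV[R]_n) : Prop :=
  (forall i, 0 <= mu 0 i) /\ \sum_i mu 0 i = 1.

Definition stationary (P : 'M[R]_n) (mu : 'rV[R]_n) : Prop :=
  distribution mu /\ mu *m P = mu.

Definition tv_dist (mu nu : 'rV[R]_n) : R :=
  2^-1 * \sum_i `|mu 0 i - nu 0 i|.

(* sigma is the smallest nonzero singular value of A (w.r.t. the Euclidean
   inner product): the singular values of A are the square roots of the
   eigenvalues of A^T A, so sigma > 0, sigma^2 is an eigenvalue of A^T A,
   and sigma^2 <= every nonzero eigenvalue of A^T A. *)
Definition smallest_nonzero_singular_value (A : 'M[R]_n) (sigma : R) : Prop :=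
  0 < sigma /\ eigenvalue (A^T *m A) (sigma ^+ 2) /\
  (forall lam : R, eigenvalue (A^T *m A) lam -> lam != 0 -> sigma ^+ 2 <= lam).

End MarkovDefs.

(* Main.v *)
Require Import Defs.
From HB Require Import structures.
From mathcomp Require Import all_boot all_order all_algebra.
From mathcomp Require Import reals.
From mathcomp Require Import ring lra complex.
Import Order.TTheory GRing.Theory Num.Theory.
Set Implicit Arguments. Unset Strict Implicit. Unset Printing Implicit Defensive.
Local Open Scope ring_scope.
Section CSpec.
Variable C : numClosedFieldType.
Variable n : nat.

Definition dotC (x y : 'rV[C]_n) : C := \sum_j x 0 j * (y 0 j)^*.

Local Open Scope sesquilinear_scope.

Lemma dotCE (x y : 'rV[C]_n) : (x *m y^t*) 0 0 = dotC x y.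
Proof. by rewrite mxE; apply: eq_bigr => j _; rewrite !mxE. Qed.

Lemma dotC_ge0 (x : 'rV[C]_n) : 0 <= dotC x x.
Proof. by apply: sumr_ge0 => j _; exact: mul_conjC_ge0. Qed.

Lemma dotC_eq0 (x : 'rV[C]_n) : dotC x x = 0 -> x = 0.
Proof.
move=> /psumr_eq0P H; apply/rowP => j; rewrite mxE.
have /eqP := H (fun _ _ => mul_conjC_ge0 _) j isT.
by rewrite mul_conjC_eq0 => /eqP.
Qed.

Variable B : 'M[C]_n.
Let M := B *m B^t*.

Lemma M_adj : M^t* = M.
Proof. by rewrite /M trmx_mul map_mxM trmxCK. Qed.

Lemma M_normal : M \is normalmx.
Proof. by apply/normalmxP; rewrite M_adj. Qed.

Let U := spectralmx M.
Let D := spectral_diag M.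

Lemma U_unit : U *m U^t* = 1%:M.
Proof. exact/unitarymxP/spectral_unitarymx. Qed.

Lemma U_unit' : U^t* *m U = 1%:M.
Proof. by rewrite -invmx_unitary ?spectral_unitarymx // mulVmx // spectral_unit. Qed.

Lemma M_decomp : M = U^t* *m diag_mx D *m U.
Proof. by rewrite -invmx_unitary ?spectral_unitarymx //; exact/orthomx_spectralP/M_normal. Qed.

Lemma UM : U *m M = diag_mx D *m U.
Proof. by rewrite {1}M_decomp !mulmxA U_unit mul1mx. Qed.

Lemma row_UM i : row i U *m M = D 0 i *: row i U.
Proof.
by rewrite -row_mul UM mul_diag_mx; apply/rowP => j; rewrite !mxE.
Qed.

Lemma dotCZ a (u v : 'rV[C]_n) : dotC (a *: u) v = a * dotC u v.
Proof. by rewrite /dotC mulr_sumr; apply: eq_bigr => j _; rewrite mxE mulrA. Qed.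

Lemma dotC_MB (u : 'rV[C]_n) : dotC (u *m B) (u *m B) = dotC (u *m M) u.
Proof. by rewrite -!dotCE /M trmx_mul map_mxM !mulmxA. Qed.

Lemma dotC_row i : dotC (row i U) (row i U) = 1.
Proof.
have := congr1 (fun N : 'M_n => N i i) U_unit; rewrite !mxE eqxx /= => H.
rewrite /dotC; etransitivity; last exact: H.
by apply: eq_bigr => j _; rewrite !mxE.
Qed.

Lemma D_quad i : dotC (row i U *m B) (row i U *m B) = D 0 i.
Proof. by rewrite dotC_MB row_UM dotCZ dotC_row mulr1. Qed.

Lemma D_ge0 i : 0 <= D 0 i.
Proof. by rewrite -D_quad dotC_ge0. Qed.

Lemma D_eq0 i : D 0 i = 0 -> row i U *m B = 0.
Proof. by move=> H; apply: dotC_eq0; rewrite D_quad. Qed.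

Lemma D_eig i : D 0 i != 0 ->
  exists2 v : 'rV_n, v *m (B^t* *m B) = D 0 i *: v & v != 0.
Proof.
move=> Hi; exists (row i U *m B).
  by rewrite mulmxA -(mulmxA _ B) -/M row_UM scalemxAl.
apply: contra Hi => /eqP H; apply/eqP; by rewrite -D_quad H /dotC big1 // => j _; rewrite mxE mul0r.
Qed.

Lemma w_entry (x : 'rV[C]_n) i : (x *m U^t*) 0 i = dotC x (row i U).
Proof. by rewrite mxE; apply: eq_bigr => j _; rewrite !mxE. Qed.

Lemma quadE (x : 'rV[C]_n) : let w := x *m U^t* in
  dotC (x *m B) (x *m B) = \sum_i D 0 i * (w 0 i * (w 0 i)^*).
Proof.
move=> w; rewrite dotC_MB -dotCE M_decomp !mulmxA -/w.
have -> : w *m diag_mx D *m U *m x^t* = w *m diag_mx D *m w^t*.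
  by rewrite /w -mulmxA trmx_mul map_mxM trmxCK.
rewrite mxE; apply: eq_bigr => j _; rewrite mul_mx_diag !mxE; ring.
Qed.

Lemma normE (x : 'rV[C]_n) : let w := x *m U^t* in
  dotC x x = \sum_i (w 0 i * (w 0 i)^*).
Proof.
move=> w; rewrite -dotCE.
have -> : x^t* = U^t* *m (x *m U^t*)^t*.
  by rewrite trmx_mul map_mxM trmxCK mulmxA U_unit' mul1mx.
by rewrite mulmxA -/w dotCE.
Qed.

Lemma spec_ineq (lam : C) (x : 'rV[C]_n) : 0 <= lam ->
  (forall i, D 0 i != 0 -> lam <= D 0 i) ->
  (forall u : 'rV_n, u *m B = 0 -> dotC x u = 0) ->
  lam * dotC x x <= dotC (x *m B) (x *m B).
Proof.
move=> lam0 Hlam Hker; rewrite quadE normE mulr_sumr; apply: ler_sum => i _.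
have [Di0|DiN0] := eqVneq (D 0 i) 0.
  by rewrite w_entry Hker ?D_eq0 // mul0r !mulr0.
by apply: ler_wpM2r; [exact: mul_conjC_ge0 | exact: Hlam].
Qed.
End CSpec.

Section RS.
Variable R : realType.
Variable n : nat.
Notation f := (real_complex R).
Notation mapC := (map_mx f).


Lemma Re_sum (I : Type) (r : seq I) (F : I -> R[i]) :
  complex.Re (\sum_(i <- r) F i) = \sum_(i <- r) complex.Re (F i).
Proof.
elim/big_rec2: _ => // i y1 y2 _ <-.
by case: (F i) => a b; case: y2 => c d.
Qed.

Lemma Im_sum (I : Type) (r : seq I) (F : I -> R[i]) :
  complex.Im (\sum_(i <- r) F i) = \sum_(i <- r) complex.Im (F i).
Proof.
elim/big_rec2: _ => // i y1 y2 _ <-.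
by case: (F i) => a b; case: y2 => c d.
Qed.

Lemma ker_transfer (A : 'M[R]_n) (x : 'rV[R]_n) :
  (forall y : 'rV[R]_n, y *m A = 0 -> \sum_j x 0 j * y 0 j = 0) ->
  forall u : 'rV[R[i]]_n, u *m mapC A = 0 -> dotC (mapC x) u = 0.
Proof.
move=> Hx u Hu.
pose a := \row_j complex.Re (u 0 j); pose b := \row_j complex.Im (u 0 j).
have Ha : a *m A = 0.
  apply/rowP => j; transitivity (complex.Re ((u *m mapC A) 0 j)); last by rewrite Hu !mxE.
  rewrite !mxE Re_sum; apply: eq_bigr => k _; rewrite !mxE.
  by case: (u 0 k) => p q /=; rewrite mulr0 subr0.
have Hb : b *m A = 0.
  apply/rowP => j; transitivity (complex.Im ((u *m mapC A) 0 j)); last by rewrite Hu !mxE.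
  rewrite !mxE Im_sum; apply: eq_bigr => k _; rewrite !mxE.
  by case: (u 0 k) => p q /=; rewrite mulr0 add0r.
have HRe : complex.Re (dotC (mapC x) u) = 0.
  rewrite -(Hx _ Ha) Re_sum; apply: eq_bigr => k _; rewrite !mxE.
  by case: (u 0 k) => p q /=; rewrite mul0r subr0.
have HIm : complex.Im (dotC (mapC x) u) = 0.
  rewrite -[RHS]oppr0 -(Hx _ Hb) Im_sum -sumrN; apply: eq_bigr => k _; rewrite !mxE.
  by case: (u 0 k) => p q /=; rewrite mul0r addr0 mulrN.
by case: (dotC _ _) HRe HIm => p q /= -> ->.
Qed.

Lemma conjf (r : R) : (f r)^* = f r.
Proof. exact: conjc_real. Qed.

Lemma dotC_real (x y : 'rV[R]_n) :
  dotC (mapC x) (mapC y) = f (\sum_j x 0 j * y 0 j).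
Proof. by rewrite rmorph_sum; apply: eq_bigr => j _; rewrite !mxE conjf rmorphM. Qed.

Local Open Scope sesquilinear_scope.

Lemma adj_real (A : 'M[R]_n) : (mapC A)^t* = mapC A^T.
Proof. by apply/matrixP => i j; rewrite !mxE conjf. Qed.

Lemma eig_transfer (A : 'M[R]_n) i
  (d := spectral_diag (mapC A *m (mapC A)^t*) 0 i) :
  d != 0 -> d = f (complex.Re d) /\ eigenvalue (A^T *m A) (complex.Re d).
Proof.
move=> Hd.
have dR : d = f (complex.Re d) by rewrite RRe_real // ger0_real // /d D_ge0.
split => //.
have [v Hv v0] := D_eig Hd.
rewrite eigenvalue_root_char -(fmorph_root f) map_char_poly -eigenvalue_root_char.
apply/eigenvalueP; exists v => //.
rewrite map_mxM -adj_real Hv; congr (_ *: _); exact: dR.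
Qed.

Lemma real_ineq (A : 'M[R]_n) (lam : R) (x : 'rV[R]_n) : 0 <= lam ->
  (forall i, spectral_diag (mapC A *m (mapC A)^t*) 0 i != 0 ->
      f lam <= spectral_diag (mapC A *m (mapC A)^t*) 0 i) ->
  (forall y : 'rV[R]_n, y *m A = 0 -> \sum_j x 0 j * y 0 j = 0) ->
  lam * (\sum_j x 0 j * x 0 j) <= \sum_j (x *m A) 0 j * (x *m A) 0 j.
Proof.
move=> lam0 Hlam Hker.
have := spec_ineq (x := mapC x) _ Hlam (ker_transfer Hker).
rewrite -map_mxM !dotC_real -rmorphM.
move=> H; have : (0 : R[i]) <= f lam by rewrite lecR.
move=> /H H2; rewrite -lecR; exact: H2.
Qed.

End RS.
Section MK.
Variable R : realType.
Variable n : nat.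
Variable P : 'M[R]_n.
Hypothesis Pst : stochastic P.
Hypothesis Pirr : irreducible P.

Lemma mxpowS k : mxpow P k.+1 = mxpow P k *m P.
Proof. by []. Qed.

Lemma mxpow_ge0 k i j : 0 <= mxpow P k i j.
Proof.
elim: k i j => [|k IH] i j; first by rewrite /mxpow /= mxE ler0n.
rewrite mxpowS mxE; apply: sumr_ge0 => l _; apply: mulr_ge0 => //; exact: Pst.1.
Qed.

Lemma stat_pow (w : 'rV[R]_n) k : w *m P = w -> w *m mxpow P k = w.
Proof.
move=> Hw; elim: k => [|k IH]; first by rewrite /mxpow /= mulmx1.
by rewrite mxpowS mulmxA IH.
Qed.

Lemma pos_spread (w : 'rV[R]_n) j : (forall l, 0 <= w 0 l) -> w *m P = w ->
  0 < w 0 j -> forall i, 0 < w 0 i.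
Proof.
move=> w0 Hw Hj i; have [k Hk] := Pirr j i.
rewrite -(stat_pow k Hw) mxE (bigD1 j) //=.
apply: (lt_le_trans (mulr_gt0 Hj Hk)); rewrite lerDl.
by apply: sumr_ge0 => l _; apply: mulr_ge0 => //; exact: mxpow_ge0.
Qed.

Lemma sum_mulP (w : 'rV[R]_n) : \sum_j (w *m P) 0 j = \sum_j w 0 j.
Proof.
under eq_bigr do rewrite mxE.
rewrite exchange_big /=; apply: eq_bigr => k _.
by rewrite -mulr_sumr Pst.2 mulr1.
Qed.

Lemma abs_stat (u : 'rV[R]_n) : u *m P = u ->
  map_mx Num.norm u *m P = map_mx Num.norm u.
Proof.
move=> Hu; set v := map_mx _ u.
have le j : v 0 j <= (v *m P) 0 j.
  rewrite /v mxE -{1}Hu !mxE; apply: (le_trans (ler_norm_sum _ _ _)).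
  apply: ler_sum => k _; rewrite !mxE normrM (ger0_norm (Pst.1 _ _)) //.
have H0 : \sum_j ((v *m P) 0 j - v 0 j) = 0.
  by rewrite sumrB sum_mulP subrr.
have Hge : forall j, true -> 0 <= (v *m P) 0 j - v 0 j by move=> j _; rewrite subr_ge0.
have := psumr_eq0P Hge H0.
move=> H; apply/rowP => j; apply/eqP; rewrite -subr_eq0; apply/eqP; exact: (H j isT).
Qed.

Lemma K0 (u : 'rV[R]_n) : u *m P = u -> \sum_j u 0 j = 0 -> u = 0.
Proof.
move=> Hu Hs.
case: (boolP [exists j, 0 < u 0 j]) => [/existsP [j Hj]|/existsPn Hneg].
  pose p := map_mx Num.norm u + u.
  have p0 l : 0 <= p 0 l by rewrite !mxE -lerBlDr sub0r -normrN ler_norm.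
  have pP : p *m P = p by rewrite mulmxDl abs_stat // Hu.
  have pj : 0 < p 0 j by rewrite !mxE gtr0_norm // addr_gt0.
  have upos i : 0 < u 0 i.
    have := pos_spread p0 pP pj i; rewrite !mxE.
    by case: (ltrP 0 (u 0 i)) => // H; rewrite ler0_norm // addNr ltxx.
  have : 0 < \sum_j u 0 j.
    rewrite (bigD1 j) //=; apply: (lt_le_trans Hj); rewrite lerDl.
    by apply: sumr_ge0 => l _; exact: ltW.
  by rewrite Hs ltxx.
have Hge : forall l, true -> 0 <= - u 0 l.
  by move=> l _; rewrite oppr_ge0 leNgt; exact: Hneg.
have Hs' : \sum_l - u 0 l = 0 by rewrite sumrN Hs oppr0.
have H := psumr_eq0P Hge Hs'.
by apply/rowP => j; rewrite mxE; apply/eqP; rewrite -oppr_eq0 (H j isT).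
Qed.

Lemma Kspan (pi0 : 'rV[R]_n) (y : 'rV[R]_n) : pi0 *m P = pi0 ->
  \sum_j pi0 0 j = 1 -> y *m P = y -> y = (\sum_j y 0 j) *: pi0.
Proof.
move=> Hp Hs Hy; apply/eqP; rewrite -subr_eq0; apply/eqP; apply: K0.
  by rewrite mulmxBl -scalemxAl Hp Hy.
rewrite (eq_bigr (fun j => y 0 j - (\sum_j y 0 j) * pi0 0 j)); last by move=> j _; rewrite !mxE.
by rewrite sumrB -mulr_sumr Hs mulr1 subrr.
Qed.
End MK.

Section Final.
Variable R : realType.
Variable n : nat.

Lemma mul_self_ge0 (y : R) : 0 <= y * y.
Proof. by rewrite -expr2 sqr_ge0. Qed.

Definition sq (v : 'rV[R]_n) := \sum_j v 0 j * v 0 j.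

Lemma sq_ge0 v : 0 <= sq v.
Proof. by apply: sumr_ge0 => j _; rewrite -expr2 sqr_ge0. Qed.

Lemma CS (a : 'I_n -> R) : (\sum_i a i) ^+ 2 <= n%:R * \sum_i a i * a i.
Proof.
set S := \sum_i a i * a i.
have E : \sum_i \sum_j (a i * a i + a j * a j) = 2 * (n%:R * S).
  under eq_bigr do rewrite big_split /= sumr_const card_ord -mulr_natl.
  rewrite big_split /= -mulr_sumr sumr_const card_ord -mulr_natl -/S -mulr_natl; ring.
have L : 2 * (\sum_i a i) ^+ 2 = \sum_i \sum_j 2 * (a i * a j).
  rewrite expr2 mulr_suml mulr_sumr; apply: eq_bigr => i _.
  by rewrite mulr_sumr mulr_sumr; apply: eq_bigr => j _.
have : 2 * (\sum_i a i) ^+ 2 <= 2 * (n%:R * S).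
  rewrite L -E; apply: ler_sum => i _; apply: ler_sum => j _.
  rewrite -subr_ge0 (_ : _ - _ = (a i - a j) ^+ 2) ?sqr_ge0 //; ring.
by rewrite ler_pM2l.
Qed.

Lemma dist_le1 (a : 'rV[R]_n) : distribution a -> forall j, a 0 j <= 1.
Proof.
move=> [a0 a1] j; rewrite -a1 (bigD1 j) //= lerDl.
by apply: sumr_ge0 => l _.
Qed.

Lemma sq_dist (a : 'rV[R]_n) : distribution a -> sq a <= 1.
Proof.
move=> Ha; have [a0 a1] := Ha; rewrite -a1; apply: ler_sum => j _.
by rewrite ler_piMr // dist_le1.
Qed.

Lemma sq_diff (a b : 'rV[R]_n) : distribution a -> distribution b -> sq (a - b) <= 2.
Proof.
move=> Ha Hb; have [a0 a1] := Ha; have [b0 b1] := Hb.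
apply: (@le_trans _ _ (\sum_j (a 0 j + b 0 j))).
  apply: ler_sum => j _; rewrite !mxE.
  have h1 : a 0 j * a 0 j <= a 0 j by rewrite ler_piMr // dist_le1.
  have h2 : b 0 j * b 0 j <= b 0 j by rewrite ler_piMr // dist_le1.
  have h3 : 0 <= a 0 j * b 0 j by rewrite mulr_ge0.
  lra.
by rewrite big_split /= a1 b1.
Qed.

Lemma dist_mul (mu : 'rV[R]_n) (P : 'M[R]_n) : distribution mu -> stochastic P ->
  distribution (mu *m P).
Proof.
move=> [m0 m1] SP; split.
  by move=> j; rewrite mxE; apply: sumr_ge0 => k _; rewrite mulr_ge0 //; exact: SP.1.
by rewrite (sum_mulP SP).
Qed.


Local Open Scope sesquilinear_scope.

Lemma main_bound (P0 P1 : 'M[R]_n) (pi : R -> 'rV[R]_n) (lam : R) :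
  stochastic P0 -> irreducible P0 -> stochastic P1 ->
  (forall s : R, 0 <= s <= 1 -> stationary ((1 - s) *: P0 + s *: P1) (pi s)) ->
  0 <= lam ->
  (forall i, spectral_diag (map_mx (real_complex R) (1%:M - P0) *m
                 (map_mx (real_complex R) (1%:M - P0))^t*) 0 i != 0 ->
      real_complex R lam <= spectral_diag (map_mx (real_complex R) (1%:M - P0) *m
                 (map_mx (real_complex R) (1%:M - P0))^t*) 0 i) ->
  forall s : R, 0 <= s <= 1 ->
    lam * (tv_dist (pi s) (pi 0)) ^+ 2 <= n%:R * (n%:R + 1) * s ^+ 2.
Proof.
move=> S0 I0 S1 Hst lam0 Hlam s Hs.
have [Dps Hps] := Hst s Hs.
have [Dp0 Hp0'] := Hst 0 (ltac:(by rewrite lexx ler01)).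
have Hp0 : pi 0 *m P0 = pi 0.
  by move: Hp0'; rewrite subr0 scale1r scale0r addr0.
set ps := pi s in Dps Hps *; set p0 := pi 0 in Dp0 Hp0 *.
set A := 1%:M - P0 in Hlam *.
have p0A : p0 *m A = 0 by rewrite /A mulmxBr mulmx1 Hp0 subrr.
set d := ps - p0.
set g := ps *m P1 - ps *m P0.
have dA : d *m A = s *: g.
  rewrite /d mulmxBl p0A subr0 /A mulmxBr mulmx1 /g.
  move: Hps; rewrite mulmxDr -!scalemxAr.
  move: (ps *m P0) (ps *m P1) => u v Hps.
  rewrite -{1}Hps; apply/rowP => j; rewrite !mxE; ring.
have sqg : sq g <= 2 by apply: sq_diff; apply: dist_mul.
have sqdA : sq (d *m A) <= 2 * s ^+ 2.
  rewrite dA /sq (eq_bigr (fun j => s ^+ 2 * (g 0 j * g 0 j))); last first.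
    by move=> j _; rewrite !mxE; ring.
  rewrite -mulr_sumr [2 * _]mulrC; apply: ler_wpM2l; [exact: sqr_ge0|exact: sqg].
have p0pos : 0 < sq p0.
  rewrite lt_def sq_ge0 andbT; apply/eqP => H0.
  have H := psumr_eq0P (fun j (_ : true) => mul_self_ge0 (p0 0 j)) H0.
  have : \sum_j p0 0 j = 0.
    by apply: big1 => j _; apply/eqP; move: (H j isT) => /eqP; rewrite mulf_eq0 orbb.
  by rewrite Dp0.2 => /eqP; rewrite oner_eq0.
set c := (\sum_j d 0 j * p0 0 j) / sq p0.
set x := d - c *: p0.
have xA : x *m A = d *m A by rewrite /x mulmxBl -scalemxAl p0A scaler0 subr0.
have xorth : \sum_j x 0 j * p0 0 j = 0.
  rewrite (eq_bigr (fun j => d 0 j * p0 0 j - c * (p0 0 j * p0 0 j))); last first.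
    by move=> j _; rewrite !mxE; ring.
  rewrite sumrB -mulr_sumr /c -/(sq p0) divfK ?subrr //; exact: lt0r_neq0.
have xker : forall y : 'rV[R]_n, y *m A = 0 -> \sum_j x 0 j * y 0 j = 0.
  move=> y Hy.
  have yP : y *m P0 = y.
    by apply/eqP; rewrite eq_sym -subr_eq0 -{1}(mulmx1 y) -mulmxBr; apply/eqP.
  rewrite (Kspan S0 I0 Hp0 Dp0.2 yP).
  rewrite (eq_bigr (fun j => (\sum_j y 0 j) * (x 0 j * p0 0 j))); last first.
    by move=> j _; rewrite !mxE; ring.
  by rewrite -mulr_sumr xorth mulr0.
have lamx : lam * sq x <= 2 * s ^+ 2.
  apply: le_trans sqdA; rewrite -xA; exact: real_ineq.
have sumd : \sum_j d 0 j = 0.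
  rewrite (eq_bigr (fun j => ps 0 j - p0 0 j)); last by move=> j _; rewrite !mxE.
  by rewrite sumrB Dps.2 Dp0.2 subrr.
have sumx : \sum_j x 0 j = - c.
  rewrite (eq_bigr (fun j => d 0 j - c * p0 0 j)); last by move=> j _; rewrite !mxE.
  by rewrite sumrB sumd -mulr_sumr Dp0.2 mulr1 sub0r.
have c2 : c ^+ 2 <= n%:R * sq x by rewrite -sqrrN -sumx; exact: CS.
have sqd : sq d <= 2 * (n%:R + 1) * sq x.
  have dE : forall j, d 0 j = x 0 j + c * p0 0 j by move=> j; rewrite !mxE; ring.
  apply: (@le_trans _ _ (2 * sq x + 2 * c ^+ 2 * sq p0)).
    rewrite /sq mulr_sumr mulr_sumr -big_split /=; apply: ler_sum => j _.
    rewrite dE -subr_ge0.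
    rewrite (_ : _ - _ = (x 0 j - c * p0 0 j) ^+ 2) ?sqr_ge0 //; ring.
  have sp1 := sq_dist Dp0.
  have sx0 := sq_ge0 x.
  have cc0 : 0 <= c ^+ 2 := sqr_ge0 c.
  have : c ^+ 2 * sq p0 <= c ^+ 2 by rewrite ler_piMr.
  nra.
have tvE : (tv_dist ps p0) ^+ 2 * 4 = (\sum_j `|d 0 j|) ^+ 2.
  rewrite /tv_dist (eq_bigr (fun j => `|d 0 j|)); last by move=> j _; rewrite !mxE.
  by set t := \sum_j _; field.
have tvd : (\sum_j `|d 0 j|) ^+ 2 <= n%:R * sq d.
  apply: (le_trans (CS _)); apply: ler_wpM2l => //.
  by apply: ler_sum => j _; rewrite -normrM ger0_norm // mul_self_ge0.
have n0 : 0 <= n%:R :> R by [].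
have sx0 := sq_ge0 x.
have : lam * ((tv_dist ps p0) ^+ 2 * 4) <= lam * (n%:R * (2 * (n%:R + 1) * sq x)).
  apply: ler_wpM2l => //; rewrite tvE; apply: (le_trans tvd); exact: ler_wpM2l.
have : n%:R * (n%:R + 1) * (lam * sq x) <= n%:R * (n%:R + 1) * (2 * s ^+ 2).
  apply: ler_wpM2l; last exact: lamx.
  by rewrite mulr_ge0 // addr_ge0.
nra.
Qed.


Lemma finmin (F : 'I_n -> R) : exists lam, 0 < lam /\ forall i, 0 < F i -> lam <= F i.
Proof.
suff H : forall sq : seq R, exists lam, 0 < lam /\ forall y, y \in sq -> 0 < y -> lam <= y.
  have [lam [l0 Hl]] := H [seq F i | i <- enum 'I_n].
  exists lam; split => // i Hi; apply: Hl => //; apply: map_f; exact: mem_enum.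
elim => [|a sq [lam [l0 Hl]]]; first by exists 1; split.
case: (ltrP 0 a) => Ha.
  exists (Num.min lam a); split; first by rewrite lt_min l0 Ha.
  move=> y; rewrite in_cons => /orP [/eqP -> _|Hy Hy0]; first by rewrite ge_min lexx orbT.
  by rewrite ge_min Hl.
exists lam; split => // y; rewrite in_cons => /orP [/eqP -> H|]; last exact: Hl.
by move: (le_lt_trans Ha H); rewrite ltxx.
Qed.

Lemma tv_ge0 (mu nu : 'rV[R]_n) : 0 <= tv_dist mu nu.
Proof. rewrite /tv_dist; apply: mulr_ge0; first by rewrite invr_ge0.
by apply: sumr_ge0 => i _. Qed.

End Final.

Local Open Scope sesquilinear_scope.

Theorem proposition4 (R : realType) (n : nat) (P0 P1 : 'M[R]_n)
  (pi : R -> 'rV[R]_n) :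
  stochastic P0 -> irreducible P0 -> aperiodic P0 ->
  stochastic P1 -> irreducible P1 -> aperiodic P1 ->
  (forall s : R, 0 <= s <= 1 ->
     stationary ((1 - s) *: P0 + s *: P1) (pi s)) ->
  (* continuity of s |-> pi_s at s = 0 (within [0,1]) in TV distance *)
  (forall eps : R, 0 < eps -> exists2 delta : R, 0 < delta &
     forall s : R, 0 <= s <= 1 -> s <= delta -> tv_dist (pi s) (pi 0) <= eps)
  /\
  (* explicit modulus *)
  (forall (eps sigma : R), 0 < eps ->
     smallest_nonzero_singular_value (1%:M - P0) sigma ->
     forall s : R, 0 <= s <= 1 ->
       s <= eps * sigma / (2 * (n%:R * Num.sqrt n%:R)) ->
       tv_dist (pi s) (pi 0) <= eps).
Proof.
move=> S0 I0 _ S1 _ _ Hst.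
have [Dp0 _] := Hst 0 (ltac:(by rewrite lexx ler01)).
have n1 : 1 <= n%:R :> R.
  case: (pickP (fun _ : 'I_n => true)) => [j _|H].
    by rewrite ler1n (leq_ltn_trans (leq0n j) (ltn_ord j)).
  by move: Dp0.2; rewrite big_pred0 // => /eqP; rewrite eq_sym oner_eq0.
pose D := spectral_diag (map_mx (real_complex R) (1%:M - P0) *m (map_mx (real_complex R) (1%:M - P0))^t*).
have Dfacts : forall i, D 0 i != 0 ->
   D 0 i = real_complex R (complex.Re (D 0 i)) /\
   eigenvalue ((1%:M - P0)^T *m (1%:M - P0)) (complex.Re (D 0 i)).
  move=> i; exact: eig_transfer.
split.
  have [lam [lam0 Hl]] := finmin (fun i : 'I_n => complex.Re (D 0 i)).
  have Hlam : forall i, D 0 i != 0 -> real_complex R lam <= D 0 i.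
    move=> i Hi; have [dR _] := Dfacts i Hi.
    have Hge : 0 <= D 0 i by exact: D_ge0.
    have Rpos : 0 < complex.Re (D 0 i).
      rewrite lt_def; apply/andP; split.
        by apply: contra Hi => /eqP H0; rewrite dR H0 rmorph0.
      by rewrite -lecR -dR.
    rewrite dR lecR; exact: Hl.
  move=> eps eps0.
  have nn : 0 < n%:R * (n%:R + 1) :> R.
    have n0 : 0 < n%:R :> R by exact: (lt_le_trans ltr01 n1).
    by rewrite mulr_gt0 // addr_gt0.
  exists (eps ^+ 2 * lam / (n%:R * (n%:R + 1))).
    by rewrite divr_gt0 // mulr_gt0 // exprn_gt0.
  move=> s Hs sd.
  have := main_bound S0 I0 S1 Hst (ltW lam0) Hlam Hs.
  move: sd; rewrite ler_pdivlMr // => sd.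
  have [s0 s1] := andP Hs.
  have ss : s ^+ 2 <= s by rewrite expr2 ler_piMr.
  have tv0 := tv_ge0 (pi s) (pi 0).
  move=> Hb.
  have : lam * tv_dist (pi s) (pi 0) ^+ 2 <= lam * eps ^+ 2 by nra.
  rewrite ler_pM2l // => H2.
  nra.
move=> eps sigma eps0 [sig0 [sigE sigmin]] s Hs sd.
have Hlam : forall i, D 0 i != 0 -> real_complex R (sigma ^+ 2) <= D 0 i.
  move=> i Hi; have [dR Heig] := Dfacts i Hi.
  rewrite dR lecR; apply: sigmin => //.
  by apply: contra Hi => /eqP H0; rewrite dR H0 rmorph0.
have := main_bound S0 I0 S1 Hst (sqr_ge0 sigma) Hlam Hs.
have [s0 s1] := andP Hs.
set q := Num.sqrt (n%:R : R).
have N0 : 0 < n%:R :> R by exact: (lt_le_trans ltr01 n1).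
have q0 : 0 < q by rewrite sqrtr_gt0.
have qq : q ^+ 2 = n%:R by rewrite sqr_sqrtr // ltW.
have K0 : 0 < 2 * (n%:R * q) by rewrite mulr_gt0 // mulr_gt0.
move: sd; rewrite ler_pdivlMr // => sd.
have tv0 := tv_ge0 (pi s) (pi 0).
set t := tv_dist _ _.
move=> Hb.
have sd2 : (s * (2 * (n%:R * q))) ^+ 2 <= (eps * sigma) ^+ 2.
  rewrite ler_pXn2r // ?nnegrE ?mulr_ge0 // ?ltW //.
have sd3 : s ^+ 2 * (4 * n%:R ^+ 3) <= eps ^+ 2 * sigma ^+ 2.
  move: sd2; rewrite !exprMn qq.
  have -> : s ^+ 2 * (2 ^+ 2 * (n%:R ^+ 2 * n%:R)) = s ^+ 2 * (4 * n%:R ^+ 3) :> R by ring.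
  by [].
move: n1 N0 sd3 Hb; set N := (n%:R : R) => n1 N0 sd3 Hb.
have h1 : sigma ^+ 2 * t ^+ 2 * (4 * N ^+ 2) <= N * (N + 1) * s ^+ 2 * (4 * N ^+ 2).
  by rewrite ler_pM2r // mulr_gt0 // exprn_gt0.
have E1 : N * (N + 1) * s ^+ 2 * (4 * N ^+ 2) = (N + 1) * (s ^+ 2 * (4 * N ^+ 3)) by ring.
have h2 : (N + 1) * (s ^+ 2 * (4 * N ^+ 3)) <= (N + 1) * (eps ^+ 2 * sigma ^+ 2).
  by rewrite ler_pM2l // addr_gt0.
have h4 : N + 1 <= 4 * N ^+ 2 by nra.
have h3 : (N + 1) * (eps ^+ 2 * sigma ^+ 2) <= 4 * N ^+ 2 * (eps ^+ 2 * sigma ^+ 2).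
  by apply: ler_wpM2r => //; rewrite mulr_ge0 // sqr_ge0.
have h5 : (sigma ^+ 2 * (4 * N ^+ 2)) * t ^+ 2 <= (sigma ^+ 2 * (4 * N ^+ 2)) * eps ^+ 2.
  have -> : sigma ^+ 2 * (4 * N ^+ 2) * t ^+ 2 = sigma ^+ 2 * t ^+ 2 * (4 * N ^+ 2) by ring.
  have -> : sigma ^+ 2 * (4 * N ^+ 2) * eps ^+ 2 = 4 * N ^+ 2 * (eps ^+ 2 * sigma ^+ 2) by ring.
  apply: (le_trans h1); rewrite E1; exact: (le_trans h2 h3).
move: h5; rewrite ler_pM2l ?mulr_gt0 ?exprn_gt0 // => H2.
nra.
Qed.
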